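(* Let $\mathcal G$ be a Kac–Moody Lie algebra and $A=\mathbb C[t_1^{\pm1},\dots,t_n^{\pm1}]$. Let $N_1,\dots,N_n$ be positive integers, for each $j$ let $a_{j1},\dots,a_{jN_j}$ be distinct non-zero complex numbers, and for each multi-index $I=(i_1,\dots,i_n)$, $1\le i_j\le N_j$, let $\lambda_I\in\mathfrak h^*$ be dominant, with not all $\lambda_I$ equal to zero. Define $\psi(h\otimes t^{\underline m})=\sum_I a_I^{\underline m}\lambda_I(h)$ for $h\in\mathfrak h'$, $\psi(h)=\sum_I\lambda_I(h)$ for $h\in\mathfrak h''$, where $a_I^{\underline m}=\prod_ja_{ji_j}^{m_j}$, and let $\bar\psi:U(H)\to A$ be the $\mathbb Z^n$-graded algebra homomorphism with $\bar\psi(h\otimes t^{\underline m})=\psi(h\otimes t^{\underline m})t^{\underline m}$ and $\bar\psi(h)=\psi(h)$ for $h\in\mathfrak h''$. Then the image $A_{\bar\psi}$ of $\bar\psi$ is an irreducible $\tilde{\mathfrak h}_A$-module.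
   Context: $\mathcal G$ is a Kac–Moody Lie algebra with Cartan subalgebra $\mathfrak h$ and simple coroots $\alpha_i^\vee$; $\mathcal G'=[\mathcal G,\mathcal G]$, $\mathfrak h'=\mathfrak h\cap\mathcal G'$, $\mathfrak h''$ a complement with $\mathfrak h=\mathfrak h'\oplus\mathfrak h''$. A weight $\lambda\in\mathfrak h^*$ is dominant if $\lambda(\alpha_i^\vee)$ is a non-negative real number for each $i$. $t^{\underline m}=t_1^{m_1}\cdots t_n^{m_n}$. $H=\mathfrak h'\otimes A\oplus\mathfrak h''$ is an abelian Lie algebra, $\mathbb Z^n$-graded ($h\otimes t^{\underline m}$ in degree $\underline m$, $\mathfrak h''$ in degree $0$), and $\tilde{\mathfrak h}_A=H\oplus\mathrm{span}(d_1,\dots,d_n)$ (abelian). $A_{\bar\psi}$ is a $\tilde{\mathfrak h}_A$-module where $x\in H$ acts by multiplication by $\bar\psi(x)$ and $d_i t^{\underline s}=s_it^{\underline s}$. *)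

(* Defs.v *)
From HB Require Import structures.
From mathcomp Require Import all_boot all_order all_algebra.
From mathcomp Require Import finmap reals.
From mathcomp.real_closed Require Import complex.
From mathcomp.multinomials Require Import monalg.

Set Implicit Arguments.
Unset Strict Implicit.
Unset Printing Implicit Defensive.

Import GRing.Theory Num.Theory.
Local Open Scope ring_scope.

(* Complex numbers: C = R[i] for R : realType (any realType is the real
   line, so R[i] is the field of complex numbers). *)

(* Cartan data of a Kac--Moody algebra: a realization (h, Pi, Pi^v) of a *)
(* generalized Cartan matrix A (Kac, Ch. 1).  Convention a_ij = alpha_j(alpha_i^v). *)
Record KMrealization (R : realType) (h : vectType R[i]) := {
  km_l : nat;
  km_A : 'M[int]_km_l;
  km_diag : forall i, km_A i i = 2;
  km_offdiag : forall i j, i != j -> km_A i j <= 0;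
  km_zero_sym : forall i j, (km_A i j == 0) = (km_A j i == 0);
  km_coroot : 'I_km_l -> h;
  km_root : 'I_km_l -> 'Hom(h, R[i]^o);
  km_coroot_free : free [seq km_coroot i | i <- enum 'I_km_l];
  km_root_free : free [seq km_root i | i <- enum 'I_km_l];
  km_pairing : forall i j, km_root j (km_coroot i) = (km_A i j)%:~R :> R[i];
  km_dim : \dim (fullv : {vspace h}) =
             (2 * km_l - \rank (map_mx (intr : int -> R[i]) km_A))%N
}.

(* h' = h \cap [G,G] = span of the simple coroots *)
Definition hprime (R : realType) (h : vectType R[i]) (K : KMrealization h)
  : {vspace h} :=
  <<[seq @km_coroot _ _ K i | i <- enum 'I_(km_l K)]>>%VS.

(* dominant weight: lambda(alpha_i^v) is a non-negative real number *)
Definition dominant (R : realType) (h : vectType R[i]) (K : KMrealization h)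
  (lam : 'Hom(h, R[i]^o)) : Prop :=
  forall i, 0 <= (lam (@km_coroot _ _ K i) : R[i]).

(* A = C[t_1^{+-1},...,t_n^{+-1}] : the group algebra of Z^n, realised as *)
(* finitely supported functions Z^n -> C ({malg C[Z^n]}); t^m = << m >>. *)
Definition Laurent (R : realType) (n : nat) := {malg R[i]['rV[int]_n]}.

Definition lmul (R : realType) (n : nat) (f g : Laurent R n) : Laurent R n :=
  \sum_(k <- msupp f) \sum_(l <- msupp g) << f@_k * g@_l *g (k + l) >>.

Definition dop (R : realType) (n : nat) (i : 'I_n) (f : Laurent R n)
  : Laurent R n :=
  \sum_(k <- msupp f) << (k ord0 i)%:~R * f@_k *g k >>.

Section Psi.
Variables (R : realType) (h : vectType R[i]) (n : nat) (N : 'I_n -> nat).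
Variable (a : forall j : 'I_n, 'I_(N j) -> R[i]).
Variable (lam : {dffun forall j : 'I_n, 'I_(N j)} -> 'Hom(h, R[i]^o)).

Definition aI (I : {dffun forall j : 'I_n, 'I_(N j)}) (m : 'rV[int]_n) : R[i] :=
  \prod_(j < n) (a (I j)) ^ (m ord0 j).

Definition psi1 (x : h) (m : 'rV[int]_n) : R[i] :=
  \sum_I aI I m * (lam I x : R[i]).

Definition psi2 (x : h) : R[i] := \sum_I (lam I x : R[i]).

Definition psibar1 (x : h) (m : 'rV[int]_n) : Laurent R n :=
  psi1 x m *: << m >>.
Definition psibar2 (x : h) : Laurent R n := psi2 x *: << 0 >>.

Variables (hp hpp : {vspace h}).

(* A_psibar = psibar(U(H)) = the unital subalgebra of A generated by psibar(H) *)
Inductive Apsibar : Laurent R n -> Prop :=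
  | Ap_one : Apsibar << 0 >>
  | Ap_gen1 x m : x \in hp -> Apsibar (psibar1 x m)
  | Ap_gen2 x : x \in hpp -> Apsibar (psibar2 x)
  | Ap_add f g : Apsibar f -> Apsibar g -> Apsibar (f + g)
  | Ap_scale c f : Apsibar f -> Apsibar (c *: f)
  | Ap_mul f g : Apsibar f -> Apsibar g -> Apsibar (lmul f g).

(* An element of htilde_A = (h' (x) A) (+) h'' (+) span(d_1..d_n) is given by  *)
(* a finite list s of pairs (x,m) with x in h' (standing for sum x (x) t^m),   *)
(* an element y of h'' and coefficients c of the d_i.  Its action on A_psibar: *)
Definition htact (s : seq (h * 'rV[int]_n)) (y : h) (c : 'I_n -> R[i])
  (f : Laurent R n) : Laurent R n :=
  \sum_(p <- s) lmul (psibar1 p.1 p.2) f + psi2 y *: f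
  + \sum_(j < n) c j *: dop j f.

Definition htsubmodule (W : Laurent R n -> Prop) : Prop :=
  [/\ forall f, W f -> Apsibar f,
      W 0,
      forall f g, W f -> W g -> W (f + g),
      forall (c : R[i]) f, W f -> W (c *: f) &
      forall s y c f, all (fun p => p.1 \in hp) s -> y \in hpp ->
        W f -> W (htact s y c f)].

Definition Apsibar_irreducible : Prop :=
  (exists f, Apsibar f /\ f != 0) /\
  forall W, htsubmodule W ->
    (forall f, W f -> f = 0) \/ (forall f, Apsibar f -> W f).

End Psi.

(* Main.v *)
Require Import Defs.
From HB Require Import structures.
From mathcomp Require Import all_boot all_order all_algebra.
From mathcomp Require Import finmap reals.
From mathcomp.real_closed Require Import complex.
From mathcomp.multinomials Require Import monalg.
From mathcomp Require Import ring zify.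
From Stdlib Require Import Classical.
Import GRing.Theory Num.Theory.
Local Open Scope ring_scope.

Lemma exp_vanish_k (F : fieldType) (k : nat) (s : seq (F * F)) (t0 : int) :
  size s = k ->
  all (fun p => p.2 != 0) s ->
  (forall j, (j < size s)%N -> \sum_(p <- s) p.1 * p.2 ^ (t0 + j%:Z) = 0) ->
  forall t, \sum_(p <- s) p.1 * p.2 ^ t = 0.
Proof.
elim: k s => [|k IH] [|[w0 u0] s] //=; try by move=> *; rewrite big_nil.
case=> sk /andP[u0nz snz] H.
set g := fun t => \sum_(p <- (w0,u0) :: s) p.1 * p.2 ^ t.
have Hg : forall t, g (t + 1) - u0 * g t =
    \sum_(p <- [seq (p.1 * (p.2 - u0), p.2) | p <- s]) p.1 * p.2 ^ t.
  move=> t; rewrite /g !big_cons big_map /= exprzDr ?unitfE // expr1z mulrDr opprD addrA.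
  have -> : \sum_(j <- s) j.1 * (j.2 - u0) * j.2 ^ t =
     \sum_(j <- s) j.1 * j.2 ^ (t + 1) - u0 * \sum_(j <- s) j.1 * j.2 ^ t.
    rewrite mulr_sumr -sumrB big_seq [RHS]big_seq; apply: eq_bigr => p ps.
    have pnz : p.2 != 0 by move/allP: snz => /(_ _ ps).
    by rewrite exprzDr ?unitfE // expr1z; ring.
  ring.
have Hrec : forall t, g (t + 1) = u0 * g t.
  move=> t; apply/eqP; rewrite -subr_eq0 Hg; apply/eqP.
  apply: (IH _ _ _ _ t); first by rewrite size_map.
    by rewrite all_map; apply: sub_all snz.
  move=> j; rewrite size_map => js; rewrite -Hg.
  have e1 : t0 + j%:Z + 1 = t0 + (j.+1)%:Z by rewrite -addrA -[j.+1]addn1 PoszD.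
  rewrite /g e1 !H ?mulr0 ?subrr //; exact: leqW.
have g0 : g t0 = 0 by have := H 0%N (ltn0Sn _); rewrite addr0.
have gk : forall k : nat, g (t0 + k%:Z) = 0 /\ g (t0 - k%:Z) = 0.
  elim=> [|m [IH1 IH2]]; first by rewrite ?oppr0 ?addr0.
  split.
    by rewrite -[m.+1]addn1 PoszD addrA Hrec IH1 mulr0.
  have := Hrec (t0 - (m.+1)%:Z).
  have -> : t0 - (m.+1)%:Z + 1 = t0 - m%:Z.
    by rewrite -[m.+1]addn1 PoszD opprD addrA subrK.
  by rewrite IH2 => /esym/eqP; rewrite mulf_eq0 (negbTE u0nz) => /eqP.
move=> t; have -> : t = t0 + (t - t0) by rewrite addrC subrK.
case: (t - t0) => m; first by case: (gk m).
by rewrite NegzE; case: (gk m.+1).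
Qed.

Section Lm.
Variables (R : realType) (n : nat).
Local Notation L := (Laurent R n).
Local Notation K := ('rV[int]_n).

Lemma scaleU (c : R[i]) (k : K) : c *: (<<k>> : L) = << c *g k >>.
Proof.
apply/malgP => k'.
rewrite [RHS]mcoeffU mcoeffZ mcoeffU.
by case: (k == k'); rewrite ?mulr1n ?mulr0n ?mulr1 ?mulr0.
Qed.

Lemma LmB (f g : L) m : (f - g)@_m = f@_m - g@_m.
Proof. exact: mcoeffB. Qed.
Lemma LmZ (c : R[i]) (f : L) m : (c *: f)@_m = c * f@_m.
Proof. exact: mcoeffZ. Qed.
Lemma Lm0 m : (0 : L)@_m = 0.
Proof. exact: mcoeff0. Qed.

Lemma msupp_eq0' (f : L) : (msupp f == fset0) = (f == 0).
Proof.
apply/eqP/eqP => [H|->]; last by rewrite msupp0.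
by apply/malgP => m; rewrite mcoeff0 mcoeff_outdom // H inE.
Qed.

Lemma rescaleU (c d : R[i]) (k : K) : d != 0 ->
  (c / d) *: (<< d *g k >> : L) = << c *g k >>.
Proof.
move=> dnz; apply/malgP => m.
rewrite [RHS]mcoeffU LmZ mcoeffU.
by case: (k == m); rewrite ?mulr1n ?mulr0n ?mulr0 // mulfVK.
Qed.

Lemma sum_coef (f : L) (F : K -> R[i] -> R[i]) m :
  (forall k, F k 0 = 0) ->
  (\sum_(k <- msupp f) << F k f@_k *g k >> : L)@_m = F m f@_m.
Proof.
move=> F0; rewrite raddf_sum /=.
under eq_bigr do rewrite mcoeffU.
case: msuppP => [mf|mf].
  rewrite (bigD1_seq m) //= ?fset_uniq // eqxx big1 ?addr0 // => k km.
  by rewrite (negbTE km).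
rewrite big_seq big1 ?F0 // => k kf.
by case: eqP => // ek; move: mf; rewrite -ek kf.
Qed.

Lemma dopE j (f : L) m : (dop j f)@_m = (m ord0 j)%:~R * f@_m.
Proof.
by rewrite /dop (@sum_coef f (fun k x => (k ord0 j)%:~R * x)) // => k; rewrite mulr0.
Qed.

Lemma dop_shiftE j (f : L) (k1 : K) m :
  (dop j f - ((k1 ord0 j)%:~R : R[i]) *: f)@_m =
  ((m ord0 j)%:~R - (k1 ord0 j)%:~R) * f@_m.
Proof.
rewrite LmB; have := dopE j f m; move: (dop j f) => D ->.
by rewrite LmZ mulrBl.
Qed.

Lemma lmulUU (a b : R[i]) (m k : K) :
  lmul (<<a *g m>> : L) <<b *g k>> = << a * b *g (m + k) >>.
Proof.
rewrite /lmul !msuppU.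
have [->|a0] := eqP; first by rewrite big_seq_fset0 mul0r monalgU0.
have [->|b0] := eqP.
  by rewrite big_seq_fset1 big_seq_fset0 mulr0 monalgU0.
by rewrite !big_seq_fset1 !mcoeffUU.
Qed.

Lemma lmul_supp (f g : L) m : m \in msupp (lmul f g) ->
  exists2 k, k \in msupp f & exists2 l, l \in msupp g & m = k + l.
Proof.
rewrite -mcoeff_neq0 /lmul raddf_sum /= => /eqP H.
case: (classic (exists2 k, k \in msupp f & exists2 l, l \in msupp g & m = k + l)) => // Hn.
exfalso; apply: H; rewrite big_seq big1 // => k kf.
rewrite raddf_sum /= big_seq big1 // => l lg; rewrite mcoeffU.
case: eqP => // e; exfalso; apply: Hn; exists k => //; exists l => //.
Qed.
End Lm.

Lemma prodXz (F : fieldType) (I : Type) (r : seq I) (f : I -> F) (t : int) :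
  (forall i, f i != 0) -> \prod_(i <- r) f i ^ t = (\prod_(i <- r) f i) ^ t.
Proof.
move=> fnz; elim: r => [|x r IH]; first by rewrite !big_nil exp1rz.
rewrite !big_cons IH exprzMl ?unitfE ?fnz //.
by elim: r {IH} => [|y r IH']; rewrite ?big_nil ?oner_neq0 // big_cons mulf_neq0.
Qed.

Section Main.
Variables (R : realType) (h : vectType R[i]) (n : nat) (N : 'I_n -> nat).
Variable (a : forall j : 'I_n, 'I_(N j) -> R[i]).
Variable (lam : {dffun forall j : 'I_n, 'I_(N j)} -> 'Hom(h, R[i]^o)).
Variables (hp hpp : {vspace h}).
Hypothesis Ha_nz : forall j k, a j k != 0.
Local Notation K := 'rV[int]_n.
Local Notation L := (Laurent R n).
Local Notation Ap := (Apsibar a lam hp hpp).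
Local Notation psi1 := (psi1 a lam).
Local Notation IT := {dffun forall j : 'I_n, 'I_(N j)}.

Definition gen (p : h * K) : bool := (p.1 \in hp) && (psi1 p.1 p.2 != 0).
Definition Rep (m : K) :=
  exists2 l : seq (h * K), all gen l & m = \sum_(p <- l) p.2.

Lemma Rep0 : Rep 0.
Proof. by exists [::]; rewrite ?big_nil. Qed.

Lemma RepD m1 m2 : Rep m1 -> Rep m2 -> Rep (m1 + m2).
Proof.
case=> l1 g1 -> [l2 g2 ->]; exists (l1 ++ l2); by rewrite ?all_cat ?g1 ?g2 ?big_cat.
Qed.

Lemma Rep1 p : gen p -> Rep p.2.
Proof. by move=> gp; exists [:: p]; rewrite /= ?gp ?big_seq1. Qed.

Lemma Ap_supp f : Ap f -> forall m, m \in msupp f -> Rep m.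
Proof.
elim=> {f}.
- by move=> m; rewrite msuppU ?oner_eq0 inE => /eqP ->; exact: Rep0.
- move=> x m xh m'; rewrite /psibar1 msuppZ msuppU ?oner_eq0.
  case: eqP => [_|/eqP nz]; rewrite ?inE // => /eqP ->.
  by apply: (@Rep1 (x, m)); rewrite /gen /= xh nz.
- move=> x xh m; rewrite /psibar2 msuppZ msuppU ?oner_eq0.
  by case: eqP => _; rewrite ?inE // => /eqP ->; exact: Rep0.
- move=> f g _ IHf _ IHg m /(fsubsetP (msuppD_le _ _)); rewrite inE.
  by case/orP; [exact: IHf|exact: IHg].
- by move=> c f _ IH m /(fsubsetP (msuppZ_le _ _)); exact: IH.
- move=> f g _ IHf _ IHg m /lmul_supp [k kf [l lg ->]].
  by apply: RepD; [exact: IHf|exact: IHg].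
Qed.

Lemma aI_scale I (t : int) (s : K) : aI a I (t *: s) = (aI a I s) ^ t.
Proof.
rewrite /aI -prodXz; last by move=> j; rewrite expfz_neq0.
by apply: eq_bigr => j _; rewrite mxE exprz_exp mulrC.
Qed.

Lemma psi1_scale x s t : psi1 x (t *: s) =
  \sum_(p <- [seq ((lam J0 x : R[i]), aI a J0 s) | J0 <- index_enum IT]) p.1 * p.2 ^ t.
Proof.
by rewrite big_map /psi1; apply: eq_bigr => I _; rewrite aI_scale mulrC.
Qed.

Lemma Rep_nat x s k : gen (x, s) -> Rep (k%:Z *: s).
Proof.
move=> gs; elim: k => [|k IH]; first by rewrite scale0r; exact: Rep0.
by rewrite -[k.+1]addn1 PoszD scalerDl scale1r; apply: RepD => //; have := @Rep1 (x, s) gs; apply.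
Qed.

Lemma gen_neg p : gen p -> Rep (- p.2).
Proof.
case: p => x s gs; have /andP[xh nz] := gs; rewrite /=.
set l := [seq ((lam J0 x : R[i]), aI a J0 s) | J0 <- index_enum IT].
set Kn := size l.
have [j Hj] : exists j : 'I_Kn, psi1 x ((- Kn%:Z + j%:Z) *: s) != 0.
  case: (pickP (fun j : 'I_Kn => psi1 x ((- Kn%:Z + j%:Z) *: s) != 0)) => [j Hj|H0].
    by exists j.
  exfalso; move/eqP: nz; apply.
  rewrite -[s]scale1r psi1_scale; apply: (@exp_vanish_k _ Kn l (- Kn%:Z)) => //.
    rewrite all_map; apply/allP => I _ /=.
    by rewrite /aI prodf_seq_neq0; apply/allP => i _; rewrite expfz_neq0.
  move=> j jl; rewrite -psi1_scale.
  by move/negbT: (H0 (Ordinal jl)); rewrite negbK => /eqP.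
have jK : (j < Kn)%N := ltn_ord j.
have -> : - s = (Kn - j).-1%:Z *: s + (- Kn%:Z + j%:Z) *: s.
  rewrite -scalerDl -scaleN1r; congr (_ *: _).
  move: jK; clearbody Kn; lia.
apply: RepD; first exact: (@Rep_nat x s _ gs).
by apply: (@Rep1 (x, (- Kn%:Z + j%:Z) *: s)); rewrite /gen /= xh Hj.
Qed.

Lemma Rep_neg m : Rep m -> Rep (- m).
Proof.
case=> l gl ->; elim: l gl => [_|p l IH] /=; first by rewrite big_nil oppr0; exact: Rep0.
case/andP => gp gl; rewrite big_cons opprD; apply: RepD; [exact: gen_neg | exact: IH].
Qed.

Variable W : L -> Prop.
Hypothesis HW : htsubmodule a lam hp hpp W.

Lemma psi2_0 : psi2 lam 0 = 0.
Proof. by rewrite /psi2 big1 // => I _; rewrite linear0. Qed.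

Lemma W_lmul x s f : x \in hp -> W f -> W (lmul (psibar1 a lam x s) f).
Proof.
case: HW => _ _ _ _ Hact xh wf.
have := Hact [:: (x, s)] 0 (fun _ => 0) f _ (mem0v _) wf.
rewrite /= xh => /(_ isT).
rewrite /htact big_seq1 psi2_0 scale0r addr0 big1 ?addr0 // => j _.
by rewrite scale0r.
Qed.

Lemma W_dop j f : W f -> W (dop j f).
Proof.
case: HW => _ _ _ _ Hact wf.
have := Hact [::] 0 (fun i => (i == j)%:R) f isT (mem0v _) wf.
rewrite /htact big_nil add0r psi2_0 scale0r add0r (bigD1 j) //= eqxx scale1r.
by rewrite big1 ?addr0 // => i /negbTE ->; rewrite scale0r.
Qed.

Lemma walk l : all gen l -> forall c k, c != 0 -> W << c *g k >> ->
  exists2 c', c' != 0 & W << c' *g (k + \sum_(p <- l) p.2) >>.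
Proof.
elim: l => [_ c k cnz wk|[x s] l IH /andP[/andP[xh nz] gl] c k cnz wk].
  by exists c; [exact: cnz | rewrite big_nil addr0; exact: wk].
have := @W_lmul x s _ xh wk; rewrite /psibar1 scaleU lmulUU => w'.
have [c' c'nz w''] := IH gl _ _ (mulf_neq0 nz cnz) w'.
by exists c'; [exact: c'nz | rewrite big_cons addrA (addrC k s); exact: w''].
Qed.

Lemma homog d f : (#|` msupp f| <= d)%N -> W f -> f != 0 ->
  exists2 c, c != 0 & exists k, W << c *g k >>.
Proof.
case: HW => _ HW0 HWadd HWscale _.
elim: d f => [|d IH] f.
  by rewrite leqn0 => /eqP/cardfs0_eq H _; rewrite -msupp_eq0' H eqxx.
move=> Hd wf fnz.
have : msupp f != fset0 by rewrite msupp_eq0'.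
case/fset0Pn => k1 k1f.
case: (classic (exists2 k2, k2 \in msupp f & k2 != k1)) => [[k2 k2f k21]|Hn].
  have [j hj] : exists j, k2 ord0 j != k1 ord0 j.
    case: (classic (exists j, k2 ord0 j != k1 ord0 j)) => // Hn'; exfalso.
    move/eqP: k21; apply; apply/matrixP => i j; rewrite !ord1.
    by apply/eqP; apply/negPn/negP => H; apply: Hn'; exists j.
  pose g := dop j f - ((k1 ord0 j)%:~R : R[i]) *: f.
  have gE : forall m, g@_m = ((m ord0 j)%:~R - (k1 ord0 j)%:~R) * f@_m.
    by move=> m; exact: dop_shiftE.
  have wg : W g by rewrite /g -scaleNr; apply: HWadd; [exact: W_dop | exact: HWscale].
  clearbody g.
  have gnz : g != 0.
    apply/eqP => g0; have := gE k2; rewrite g0 mcoeff0 => /esym/eqP.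
    by rewrite mulf_eq0 subr_eq0 eqr_int (negbTE hj) /= mcoeff_eq0 k2f.
  have sub : (msupp g `<=` msupp f `\ k1)%fset.
    apply/fsubsetP => m; rewrite in_fsetD1 -!mcoeff_neq0 gE mulf_eq0 negb_or.
    rewrite subr_eq0 eqr_int => /andP[H1 ->]; rewrite andbT.
    by apply: contra H1 => /eqP ->.
  apply: (IH g) => //; apply: leq_trans (fsubset_leq_card sub) _.
  by move: Hd; rewrite (cardfsD1 k1 (msupp f)) k1f.
have Hf : f = << f@_k1 *g k1 >>.
  apply/malgP => m; rewrite mcoeffU; case: (eqVneq k1 m) => [->|ne] //=.
  apply/eqP; rewrite mcoeff_eq0; apply/negP => mf; apply: Hn; exists m => //.
  by rewrite eq_sym.
by exists (f@_k1); [rewrite mcoeff_neq0 | exists k1; rewrite -Hf].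
Qed.

End Main.

Arguments homog {R h n N a lam hp hpp W} HW d f.
Arguments walk {R h n N a lam hp hpp W} HW l _ c k _ _.
Arguments Rep_neg {R h n N a lam hp} Ha_nz {m} _.
Arguments Ap_supp {R h n N a lam hp hpp f} _ m _.

Theorem lemma3p16 (R : realType) (h : vectType R[i]) (K : KMrealization h)
  (hpp : {vspace h})
  (Hcompl : (hprime K + hpp)%VS = fullv)
  (Hdirect : directv (hprime K + hpp))
  (n : nat) (N : 'I_n -> nat) (HN : forall j, (0 < N j)%N)
  (a : forall j : 'I_n, 'I_(N j) -> R[i])
  (Ha_inj : forall j, injective (a j))
  (Ha_nz : forall j k, a j k != 0)
  (lam : {dffun forall j : 'I_n, 'I_(N j)} -> 'Hom(h, R[i]^o))
  (Hdom : forall I, dominant K (lam I))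
  (Hnz : exists I, lam I != 0) :
  Apsibar_irreducible a lam (hprime K) hpp.
Proof.
split.
  exists << 0 >>; split; first exact: Ap_one.
  by rewrite monalgU_eq0 oner_eq0.
move=> W HW.
case: (classic (exists f, W f /\ f != 0)) => [[f [wf fnz]]|Hn]; last first.
  by left => f wf; apply/eqP; apply/negPn/negP => fnz; apply: Hn; exists f; split.
right.
have HW' := HW; case: HW' => Hsub HW0 HWadd HWscale _.
have [c cnz [k wk]] := homog HW _ _ (leqnn _) wf fnz.
have apk := Hsub _ wk.
have kin : k \in msupp << c *g k >> by rewrite msuppU (negbTE cnz) inE.
have [l gl ek] := Rep_neg Ha_nz (Ap_supp apk _ kin).
have [c' c'nz w0] := walk HW _ gl _ _ cnz wk.
rewrite -ek subrr in w0.
have w1 : W << 1 *g 0 >>.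
  by rewrite -(@rescaleU R n 1 c' 0 c'nz); apply: HWscale.
move=> g apg; rewrite (monalgE g) big_seq.
apply: big_ind => [|? ? ? ?|m mf]; [exact: HW0 | exact: HWadd | ].
have [l' gl' em] := Ap_supp apg _ mf.
have [c'' c''nz w] := walk HW _ gl' _ _ (oner_neq0 _) w1.
rewrite add0r -em in w.
by rewrite -(@rescaleU R n (g@_m) c'' m c''nz); apply: HWscale.
Qed.
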